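(* For any frame $L$, $\mathrm{F}(L)=\mathrm{C}(\mathrm{coS}(L))$ if and only if $\mathrm{coS}(L)$ is an extremally disconnected P-frame.
   Context: $\mathbb{Q}$ is the rationals. A sublocale of $L$ is a subset closed under arbitrary meets and such that $x\to s\in S$ for $x\in L$, $s\in S$; $\mathrm{coS}(L)$ is the frame of sublocales ordered by reverse inclusion, with pseudocomplement $^\ast$. The frame $\mathfrak{L}(\overline{\mathbb{IR}})$ is presented by generators $(r,\textsf{---})$, $(\textsf{---},s)$ ($r,s\in\mathbb{Q}$) with relations (r1) $(r,\textsf{---})\wedge(\textsf{---},s)=0$ for $r\ge s$; (r3) $(r,\textsf{---})=\bigvee_{s>r}(s,\textsf{---})$; (r4) $(\textsf{---},s)=\bigvee_{r<s}(\textsf{---},r)$. For a frame $M$, $\mathrm{C}(M)$ is the set of frame homomorphisms $f\colon\mathfrak{L}(\overline{\mathbb{IR}})\to M$ satisfying (r2) $f(r,\textsf{---})\vee f(\textsf{---},s)=1$ for $r<s$, (r5) $\bigvee_r f(r,\textsf{---})=1$, (r6) $\bigvee_s f(\textsf{---},s)=1$ (i.e. continuous real functions on $M$). $\overline{\mathrm{F}}(L)$ is the set of homomorphisms $f\colon\mathfrak{L}(\overline{\mathbb{IR}})\to\mathrm{coS}(L)$ with $f(r,\textsf{---})^\ast\le f(\textsf{---},s)$ and $f(\textsf{---},s)^\ast\le f(r,\textsf{---})$ for $r<s$, ordered by $f\le g$ iff $f(r,\textsf{---})\le g(r,\textsf{---})$ and $g(\textsf{---},s)\le f(\textsf{---},s)$;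 it is a complete lattice with top $\boldsymbol{+\infty}$ ($(r,\textsf{---})\mapsto1$, $(\textsf{---},s)\mapsto0$) and bottom $\boldsymbol{-\infty}$ ($(r,\textsf{---})\mapsto0$, $(\textsf{---},s)\mapsto1$). $\mathrm{F}(L)$ is the set of $f\in\overline{\mathrm{F}}(L)$ such that for all $g\in\overline{\mathrm{F}}(L)$, $f\vee g=\boldsymbol{+\infty}\Rightarrow g=\boldsymbol{+\infty}$ and $f\wedge g=\boldsymbol{-\infty}\Rightarrow g=\boldsymbol{-\infty}$; note $\mathrm{C}(\mathrm{coS}(L))\subseteq\overline{\mathrm{F}}(L)$. A frame $M$ is extremally disconnected if $a^\ast\vee a^{\ast\ast}=1$ for all $a$; an element $a\in M$ is a cozero if $a=f(\textsf{---},0)\vee f(0,\textsf{---})$ for some $f\in\mathrm{C}(M)$; $M$ is a P-frame if every cozero element is complemented. *)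

(* Defs.v *)
From Stdlib Require Import ClassicalEpsilon.
From mathcomp Require Import all_boot all_order all_algebra.
Set Implicit Arguments. Unset Strict Implicit. Unset Printing Implicit Defensive.
Import Order.TTheory GRing.Theory Num.Theory.

(* The point [pt] is only used to make the (classical) choice of       *)
(* suprema/infima well-typed; when a supremum exists, [sup] returns it. *)
Record poset := Poset { car :> Type; le : car -> car -> Prop; pt : car }.
Arguments le {p}.

Section Ops.
Variable M : poset.

Definition is_ub (P : M -> Prop) (x : M) := forall y, P y -> le y x.
Definition is_lb (P : M -> Prop) (x : M) := forall y, P y -> le x y.
Definition is_sup (P : M -> Prop) (x : M) :=
  is_ub P x /\ forall z, is_ub P z -> le x z.
Definition is_inf (P : M -> Prop) (x : M) :=
  is_lb P x /\ forall z, is_lb P z -> le z x.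

Definition sup (P : M -> Prop) : M := epsilon (inhabits (pt M)) (is_sup P).
Definition inf (P : M -> Prop) : M := epsilon (inhabits (pt M)) (is_inf P).
Definition top : M := sup (fun _ => True).
Definition bot : M := sup (fun _ => False).
Definition meet (a b : M) : M := inf (fun y => y = a \/ y = b).
Definition join (a b : M) : M := sup (fun y => y = a \/ y = b).
Definition imp (a b : M) : M := sup (fun y => le (meet y a) b).
Definition pc (a : M) : M := sup (fun b => meet a b = bot).

Definition is_frame : Prop :=
  [/\ (forall x : M, le x x),
      (forall x y z : M, le x y -> le y z -> le x z),
      (forall x y : M, le x y -> le y x -> x = y),
      (forall P : M -> Prop, exists x, is_sup P x)
    & (forall (a : M) (P : M -> Prop),
         meet a (sup P) = sup (fun y => exists p, P p /\ y = meet a p))].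

End Ops.

Definition sublocale (L : poset) (S : L -> Prop) : Prop :=
  (forall A : L -> Prop, (forall a, A a -> S a) -> S (inf A)) /\
  (forall (x s : L), S s -> S (imp x s)).

Lemma sublocale_full (L : poset) : sublocale (fun _ : L => True).
Proof. by split. Qed.

Definition coS (L : poset) : poset :=
  {| car := {S : L -> Prop | sublocale S};
     le := fun S T => forall x, proj1_sig T x -> proj1_sig S x;
     pt := exist _ (fun _ : L => True) (sublocale_full L) |}.

(* Frame homomorphisms  L(IR-bar) -> M.  By the universal property of   *)
(* the presentation, such a homomorphism is the same thing as an        *)
(* assignment of the generators (r,-) |-> lo r and (-,s) |-> hi s       *)
(* satisfying the relations (r1), (r3), (r4) in M.                      *)
Record rmap (M : poset) := RMap { lo : rat -> M; hi : rat -> M }.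

Local Open Scope ring_scope.

Definition is_hom (M : poset) (f : rmap M) : Prop :=
  [/\ (forall r s : rat, s <= r -> meet (lo f r) (hi f s) = bot M),       (* r1 *)
      (forall r : rat, lo f r = sup (fun y => exists s, r < s /\ y = lo f s)) (* r3 *)
    & (forall s : rat, hi f s = sup (fun y => exists r, r < s /\ y = hi f r))]. (* r4 *)

Definition inC (M : poset) (f : rmap M) : Prop :=
  [/\ is_hom f,
      (forall r s : rat, r < s -> join (lo f r) (hi f s) = top M),            (* r2 *)
      sup (fun y => exists r, y = lo f r) = top M                             (* r5 *)
    & sup (fun y => exists s, y = hi f s) = top M].                           (* r6 *)

Definition inFbar (L : poset) (f : rmap (coS L)) : Prop :=
  is_hom f /\
  (forall r s : rat, r < s ->
     le (pc (lo f r)) (hi f s) /\ le (pc (hi f s)) (lo f r)).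

Definition Fle (L : poset) (f g : rmap (coS L)) : Prop :=
  (forall r, le (lo f r) (lo g r)) /\ (forall s, le (hi g s) (hi f s)).

Definition plus_inf (L : poset) : rmap (coS L) :=
  RMap (fun _ => top (coS L)) (fun _ => bot (coS L)).
Definition minus_inf (L : poset) : rmap (coS L) :=
  RMap (fun _ => bot (coS L)) (fun _ => top (coS L)).

Definition Fbar_is_join (L : poset) (f g h : rmap (coS L)) : Prop :=
  [/\ inFbar h, Fle f h, Fle g h &
      forall k, inFbar k -> Fle f k -> Fle g k -> Fle h k].
Definition Fbar_is_meet (L : poset) (f g h : rmap (coS L)) : Prop :=
  [/\ inFbar h, Fle h f, Fle h g &
      forall k, inFbar k -> Fle k f -> Fle k g -> Fle k h].

Definition inF (L : poset) (f : rmap (coS L)) : Prop :=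
  inFbar f /\
  forall g, inFbar g ->
    (Fbar_is_join f g (plus_inf L) -> g = plus_inf L) /\
    (Fbar_is_meet f g (minus_inf L) -> g = minus_inf L).

Definition extremally_disconnected (M : poset) : Prop :=
  forall a : M, join (pc a) (pc (pc a)) = top M.

Definition cozero (M : poset) (a : M) : Prop :=
  exists f : rmap M, inC f /\ a = join (hi f 0) (lo f 0).

Definition complemented (M : poset) (a : M) : Prop :=
  exists b : M, meet a b = bot M /\ join a b = top M.

Definition P_frame (M : poset) : Prop :=
  forall a : M, cozero a -> complemented a.

(* Main.v *)
Require Import Defs.
From mathcomp Require Import all_boot all_order all_algebra.
From mathcomp Require Import lra.
From Stdlib Require Import ClassicalEpsilon FunctionalExtensionality PropExtensionality ProofIrrelevance.
Set Implicit Arguments. Unset Strict Implicit. Unset Printing Implicit Defensive.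
Import Order.TTheory GRing.Theory Num.Theory.
Local Open Scope ring_scope.
Lemma inv_lt (r s : rat) : 0 < r -> 0 < s -> r < s -> s^-1 < r^-1.
Proof. move=> hr hs rs; rewrite ltf_pV2 ?posrE //. Qed.
Lemma inv_le (r s : rat) : 0 < r -> 0 < s -> r <= s -> s^-1 <= r^-1.
Proof. move=> hr hs rs; rewrite lef_pV2 ?posrE //. Qed.
Lemma inv_pos (r : rat) : 0 < r -> 0 < r^-1.
Proof. by rewrite invr_gt0. Qed.
Lemma inv_lt1 (r : rat) : 1 < r -> r^-1 < 1.
Proof. move=> h; rewrite invf_lt1 //; lra. Qed.
Lemma inv_gt1 (r : rat) : 0 < r -> r < 1 -> 1 < r^-1.
Proof. move=> h1 h2; rewrite invf_gt1 //. Qed.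

Ltac norm_rat := repeat match goal with
 | H : ((?x < ?y)%R = false) |- _ => move/negbT: H; rewrite -leNgt => H
 | H : ((?x <= ?y)%R = false) |- _ => move/negbT: H; rewrite -ltNge => H
 end.
Ltac ifs := repeat (case: ifP => ?); norm_rat.
Ltac rlra := repeat match goal with H : ?T |- _ =>
  lazymatch T with is_true _ => fail | rat => fail | poset => fail | is_frame _ => fail | _ => clear H end end; lra.
Definition FbarM (M : poset) (f : rmap M) : Prop :=
  is_hom f /\
  (forall r s : rat, r < s -> le (pc (lo f r)) (hi f s) /\ le (pc (hi f s)) (lo f r)).
Definition FleM (M : poset) (f g : rmap M) : Prop :=
  (forall r, le (lo f r) (lo g r)) /\ (forall s, le (hi g s) (hi f s)).
Definition pinf (M : poset) : rmap M := RMap (fun _ => top M) (fun _ => bot M).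
Definition minf (M : poset) : rmap M := RMap (fun _ => bot M) (fun _ => top M).
Definition joinM (M : poset) (f g h : rmap M) : Prop :=
  [/\ FbarM h, FleM f h, FleM g h &
      forall k, FbarM k -> FleM f k -> FleM g k -> FleM h k].
Definition meetM (M : poset) (f g h : rmap M) : Prop :=
  [/\ FbarM h, FleM h f, FleM h g &
      forall k, FbarM k -> FleM k f -> FleM k g -> FleM k h].
Definition inFM (M : poset) (f : rmap M) : Prop :=
  FbarM f /\
  forall g, FbarM g ->
    (joinM f g (pinf M) -> g = pinf M) /\
    (meetM f g (minf M) -> g = minf M).
Definition dense (M : poset) (d : M) := forall y, le (meet y d) (bot M) -> le y (bot M).
Definition negm (M : poset) (f : rmap M) : rmap M :=
  RMap (fun r => hi f (- r)) (fun s => lo f (- s)).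

Section Frame.
Context (M : poset) (HM : is_frame M).

Lemma lrefl (x : M) : le x x.
Proof. by case: HM. Qed.
Lemma ltrans (x y z : M) : le x y -> le y z -> le x z.
Proof. case: HM => _ H _ _ _; exact: H. Qed.
Lemma lanti (x y : M) : le x y -> le y x -> x = y.
Proof. case: HM => _ _ H _ _; exact: H. Qed.

Lemma sup_spec (P : M -> Prop) : is_sup P (sup P).
Proof. rewrite /sup; apply: epsilon_spec; case: HM => _ _ _ H _; exact: H. Qed.
Lemma sup_ub (P : M -> Prop) y : P y -> le y (sup P).
Proof. by move=> Py; case: (sup_spec P) => H _; apply: H. Qed.
Lemma sup_lub (P : M -> Prop) z : (forall y, P y -> le y z) -> le (sup P) z.
Proof. by move=> H; case: (sup_spec P) => _ H'; apply: H'. Qed.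
Lemma sup_eq (P : M -> Prop) x : P x -> (forall y, P y -> le y x) -> sup P = x.
Proof. move=> Px H; apply: lanti; [exact: sup_lub | exact: sup_ub]. Qed.
Lemma sup_ext (P Q : M -> Prop) : (forall y, P y <-> Q y) -> sup P = sup Q.
Proof.
move=> H; apply: lanti; apply: sup_lub => y Hy; apply: sup_ub; by apply/H.
Qed.
Lemma sup_unique (P : M -> Prop) x : is_sup P x -> sup P = x.
Proof. move=> [H1 H2]; apply: lanti; [exact: sup_lub | apply: H2; exact: sup_ub]. Qed.

Lemma inf_spec (P : M -> Prop) : is_inf P (inf P).
Proof.
rewrite /inf; apply: epsilon_spec; exists (sup (is_lb P)); split.
- move=> y Py; apply: sup_lub => z Hz; exact: Hz.
- move=> z Hz; exact: sup_ub.
Qed.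
Lemma inf_lb (P : M -> Prop) y : P y -> le (inf P) y.
Proof. by move=> Py; case: (inf_spec P) => H _; apply: H. Qed.
Lemma inf_glb (P : M -> Prop) z : (forall y, P y -> le z y) -> le z (inf P).
Proof. by move=> H; case: (inf_spec P) => _ H'; apply: H'. Qed.

Lemma le_top (x : M) : le x (top M).
Proof. exact: sup_ub. Qed.
Lemma bot_le (x : M) : le (bot M) x.
Proof. by apply: sup_lub. Qed.
Lemma le_bot (x : M) : le x (bot M) -> x = bot M.
Proof. move=> H; apply: lanti => //; exact: bot_le. Qed.
Lemma top_le (x : M) : le (top M) x -> x = top M.
Proof. move=> H; apply: lanti => //; exact: le_top. Qed.

Lemma meet_l (a b : M) : le (meet a b) a.
Proof. apply: inf_lb; by left. Qed.
Lemma meet_r (a b : M) : le (meet a b) b.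
Proof. apply: inf_lb; by right. Qed.
Lemma meet_glb (a b c : M) : le c a -> le c b -> le c (meet a b).
Proof. by move=> H1 H2; apply: inf_glb => y [->|->]. Qed.
Lemma join_l (a b : M) : le a (join a b).
Proof. apply: sup_ub; by left. Qed.
Lemma join_r (a b : M) : le b (join a b).
Proof. apply: sup_ub; by right. Qed.
Lemma join_lub (a b c : M) : le a c -> le b c -> le (join a b) c.
Proof. by move=> H1 H2; apply: sup_lub => y [->|->]. Qed.

Lemma meetC (a b : M) : meet a b = meet b a.
Proof. apply: lanti; apply: meet_glb; solve [exact: meet_l | exact: meet_r]. Qed.
Lemma joinC (a b : M) : join a b = join b a.
Proof. apply: lanti; apply: join_lub; solve [exact: join_l | exact: join_r]. Qed.
Lemma meet_mono (a b a' b' : M) : le a a' -> le b b' -> le (meet a b) (meet a' b').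
Proof.
move=> H1 H2; apply: meet_glb; [apply: ltrans H1; exact: meet_l | apply: ltrans H2; exact: meet_r].
Qed.
Lemma join_mono (a b a' b' : M) : le a a' -> le b b' -> le (join a b) (join a' b').
Proof.
move=> H1 H2; apply: join_lub; [apply: ltrans H1 _; exact: join_l | apply: ltrans H2 _; exact: join_r].
Qed.
Lemma meet_topl (x : M) : meet (top M) x = x.
Proof. apply: lanti; [exact: meet_r | apply: meet_glb; [exact: le_top | exact: lrefl]]. Qed.
Lemma meet_topr (x : M) : meet x (top M) = x.
Proof. by rewrite meetC meet_topl. Qed.

Lemma dist (a : M) (P : M -> Prop) :
  meet a (sup P) = sup (fun y => exists p, P p /\ y = meet a p).
Proof. case: HM => _ _ _ _ H; exact: H. Qed.
Lemma meet_sup_le (a : M) (P : M -> Prop) z :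
  (forall p, P p -> le (meet a p) z) -> le (meet a (sup P)) z.
Proof. move=> H; rewrite dist; apply: sup_lub => y [p [Pp ->]]; exact: H. Qed.
Lemma meet_join_le (a b c z : M) :
  le (meet a b) z -> le (meet a c) z -> le (meet a (join b c)) z.
Proof. move=> H1 H2; apply: meet_sup_le => p [->|->] //. Qed.

Lemma pc_disj (a : M) : le (meet a (pc a)) (bot M).
Proof. apply: meet_sup_le => p Hp; rewrite Hp; exact: lrefl. Qed.
Lemma pc_max (a b : M) : le (meet a b) (bot M) -> le b (pc a).
Proof. move=> H; apply: sup_ub; exact: le_bot. Qed.
Lemma pc_iff (a b : M) : le b (pc a) <-> le (meet a b) (bot M).
Proof.
split; last exact: pc_max.
move=> H; apply: ltrans (pc_disj a); apply: meet_mono => //; exact: lrefl.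
Qed.
Lemma pc_sym (a b : M) : le b (pc a) -> le a (pc b).
Proof. by move/pc_iff => H; apply/pc_iff; rewrite meetC. Qed.
Lemma pc_anti (a b : M) : le a b -> le (pc b) (pc a).
Proof.
move=> H; apply: pc_max; apply: ltrans (pc_disj b); apply: meet_mono => //; exact: lrefl.
Qed.
Lemma le_pcpc (a : M) : le a (pc (pc a)).
Proof. apply: pc_sym; exact: lrefl. Qed.
Lemma pc3 (a : M) : pc (pc (pc a)) = pc a.
Proof. apply: lanti; [apply: pc_anti; exact: le_pcpc | exact: le_pcpc]. Qed.
Lemma pc_top : pc (top M) = bot M.
Proof. apply: le_bot; rewrite -(meet_topl (pc (top M))); exact: pc_disj. Qed.
Lemma pc_bot : pc (bot M) = top M.
Proof. apply: top_le; apply: pc_max; exact: meet_l. Qed.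
Lemma disj_le (a b c : M) : le (meet a b) (bot M) -> le c b -> le (meet a c) (bot M).
Proof. move=> H1 H2; apply: ltrans H1; apply: meet_mono => //; exact: lrefl. Qed.
Lemma join_top_pc (a b : M) : join a b = top M -> le (pc a) b.
Proof.
move=> H; rewrite -(meet_topr (pc a)) -H; apply: meet_join_le.
- rewrite meetC; apply: ltrans (pc_disj a) _; exact: bot_le.
- exact: meet_r.
Qed.
Lemma pc_join (a b : M) : le (meet (pc a) (pc b)) (pc (join a b)).
Proof.
apply: pc_sym; apply: pc_max; apply: meet_join_le.
- rewrite meetC; apply: ltrans (pc_disj a); apply: meet_mono; [exact: lrefl| exact: meet_l].
- rewrite meetC; apply: ltrans (pc_disj b); apply: meet_mono; [exact: lrefl| exact: meet_r].
Qed.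
Lemma le_meetP (a b c : M) : le c (meet a b) -> le c a /\ le c b.
Proof. move=> H; split; apply: ltrans H _; [exact: meet_l | exact: meet_r]. Qed.


Lemma hi_mono (f : rmap M) s t : is_hom f -> s <= t -> le (hi f s) (hi f t).
Proof.
case=> _ _ H4; rewrite le_eqVlt => /orP [/eqP ->|lt]; first exact: lrefl.
rewrite (H4 t); apply: sup_ub => //; by exists s.
Qed.
Lemma lo_anti (f : rmap M) r s : is_hom f -> r <= s -> le (lo f s) (lo f r).
Proof.
case=> _ H3 _; rewrite le_eqVlt => /orP [/eqP ->|lt]; first exact: lrefl.
rewrite (H3 r); apply: sup_ub => //; by exists s.
Qed.
Lemma hom_disj (f : rmap M) r s : is_hom f -> s <= r -> le (meet (lo f r) (hi f s)) (bot M).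
Proof. case=> H1 _ _ H; rewrite H1 //; exact: lrefl. Qed.
Lemma hom_lo_pc (f : rmap M) r s : is_hom f -> s <= r -> le (lo f r) (pc (hi f s)).
Proof. move=> Hf Hsr; apply: pc_max => //; rewrite meetC //; exact: hom_disj. Qed.
Lemma hom_hi_pc (f : rmap M) r s : is_hom f -> s <= r -> le (hi f s) (pc (lo f r)).
Proof. move=> Hf Hsr; apply: pc_max => //; exact: hom_disj. Qed.

Lemma Fbar_pcpc (f : rmap M) t s : FbarM f -> t < s -> le (pc (pc (hi f t))) (hi f s).
Proof.
move=> [Hh HF] lts.
have [H1 H2] : t <= (t + s) / 2 /\ (t + s) / 2 < s by split; lra.
apply: ltrans (_ : le _ (pc (lo f ((t + s) / 2)))) _ => //.
- rewrite -(pc3 (lo f _)); apply: pc_anti => //; apply: pc_anti => //.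
  exact: hom_hi_pc.
- by case: (HF _ _ H2).
Qed.

Lemma C_Fbar (f : rmap M) : inC f -> FbarM f.
Proof.
case=> Hh H2 _ _; split => // r s lt; split.
- apply: join_top_pc => //; exact: H2.
- apply: join_top_pc => //; rewrite joinC //; exact: H2.
Qed.

Lemma ED_r2 (f : rmap M) : extremally_disconnected M -> FbarM f ->
  forall r s, r < s -> join (lo f r) (hi f s) = top M.
Proof.
move=> ED [Hh HF] r s lt.
have [H1 H2] : r < (r + s) / 2 /\ (r + s) / 2 < s by split; lra.
apply: top_le => //; rewrite -(ED (hi f ((r + s) / 2))).
apply: join_mono => //; first by case: (HF _ _ H1).
apply: Fbar_pcpc => //.
Qed.

Definition ubm (f h : rmap M) : rmap M :=
  RMap (fun r => sup (fun y => exists t, r < t /\ y = pc (meet (hi f t) (hi h t))))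
       (fun s => meet (hi f s) (hi h s)).

Lemma ubm_Fbar f h : FbarM f -> FbarM h -> FbarM (ubm f h).
Proof.
move=> [Hf HFf] [Hh HFh].
have Mm : forall s t, s <= t -> le (meet (hi f s) (hi h s)) (meet (hi f t) (hi h t)).
  by move=> s t st; apply: meet_mono => //; apply: hi_mono.
split; first split.
- move=> r s sr /=; apply: le_bot => //; rewrite meetC //.
  apply: meet_sup_le => // p [t [rt ->]].
  apply: ltrans (pc_disj _); apply: meet_mono => //; last exact: lrefl.
  apply: Mm; exact: le_trans sr (ltW rt).
- move=> r /=; apply: lanti => //; apply: sup_lub => // y.
  + move=> [t [rt ->]].
    have [H1 H2] : r < (r + t) / 2 /\ (r + t) / 2 < t by split; lra.
    apply: ltrans (_ : le _ (sup (fun y => exists t0, (r + t) / 2 < t0 /\ y = pc (meet (hi f t0) (hi h t0))))) _ => //.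
    * apply: sup_ub => //; by exists t.
    * apply: sup_ub => //; by exists ((r + t) / 2).
  + move=> [s [rs ->]]; apply: sup_lub => // y0 [t [st ->]].
    apply: sup_ub => //; exists t; split => //; exact: lt_trans rs st.
- move=> s /=; apply: lanti => //; last first.
    by apply: sup_lub => // y [r [rs ->]]; apply: Mm; exact: ltW.
  case: (Hf) => _ _ H4f; case: (Hh) => _ _ H4h.
  rewrite {1}(H4f s) meetC //; apply: meet_sup_le => // p [r1 [r1s ->]].
  rewrite {1}(H4h s) meetC //; apply: meet_sup_le => // q [r2 [r2s ->]].
  case: (leP r1 r2) => Hr.
  + apply: ltrans (_ : le _ (meet (hi f r2) (hi h r2))) _ => //.
      apply: meet_mono => //; [exact: hi_mono | exact: lrefl].
    apply: sup_ub => //; by exists r2.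
  + apply: ltrans (_ : le _ (meet (hi f r1) (hi h r1))) _ => //.
      apply: meet_mono => //; [exact: lrefl | apply: hi_mono => //; exact: ltW].
    apply: sup_ub => //; by exists r1.
- move=> r s rs /=.
  have [H1 H2] : r < (r + s) / 2 /\ (r + s) / 2 < s by split; lra.
  split; last by apply: sup_ub => //; exists s.
  apply: ltrans (_ : le _ (pc (pc (meet (hi f ((r + s) / 2)) (hi h ((r + s) / 2)))))) _ => //.
    apply: pc_anti => //; apply: sup_ub => //; by exists ((r + s) / 2).
  apply: meet_glb => //.
  + apply: ltrans (Fbar_pcpc (conj Hf HFf) H2) => //.
    apply: pc_anti => //; apply: pc_anti => //; exact: meet_l.
  + apply: ltrans (Fbar_pcpc (conj Hh HFh) H2) => //.
    apply: pc_anti => //; apply: pc_anti => //; exact: meet_r.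
Qed.

Lemma ubm_le_l f h : FbarM f -> FleM f (ubm f h).
Proof.
move=> [Hf _]; split => [r|s] /=; last exact: meet_l.
case: (Hf) => _ H3 _; rewrite (H3 r); apply: sup_lub => // y [t [rt ->]].
apply: ltrans (_ : le _ (pc (meet (hi f t) (hi h t)))) _ => //.
  apply: ltrans (hom_lo_pc Hf (lexx t)) _ => //; apply: pc_anti => //; exact: meet_l.
apply: sup_ub => //; by exists t.
Qed.

Lemma ubm_le_r f h : FbarM h -> FleM h (ubm f h).
Proof.
move=> [Hh _]; split => [r|s] /=; last exact: meet_r.
case: (Hh) => _ H3 _; rewrite (H3 r); apply: sup_lub => // y [t [rt ->]].
apply: ltrans (_ : le _ (pc (meet (hi f t) (hi h t)))) _ => //.
  apply: ltrans (hom_lo_pc Hh (lexx t)) _ => //; apply: pc_anti => //; exact: meet_r.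
apply: sup_ub => //; by exists t.
Qed.

Lemma rmap_eta (f : rmap M) : f = RMap (lo f) (hi f).
Proof. by case: f. Qed.

Lemma join_half f g : FbarM f -> dense (sup (fun x => exists s, x = hi f s)) ->
  FbarM g -> joinM f g (pinf M) -> g = pinf M.
Proof.
move=> Hf Dn Hg [_ _ _ J4].
have [_ Khi] := J4 _ (ubm_Fbar Hf Hg) (ubm_le_l g Hf) (ubm_le_r f Hg).
simpl in Khi.
case: (Hf) => Hfh _; case: (Hg) => Hgh HFg.
have hg0 : forall s, hi g s = bot M.
  move=> s; apply: le_bot => //; apply: Dn; apply: meet_sup_le => // p [t ->].
  case: (leP s t) => st.
  - apply: ltrans (Khi t); rewrite meetC //; apply: meet_mono => //; [exact: lrefl| exact: hi_mono].
  - apply: ltrans (Khi s); rewrite meetC //; apply: meet_mono => //; [apply: hi_mono => //; exact: ltW | exact: lrefl].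
have lg1 : forall r, lo g r = top M.
  move=> r; apply: top_le => //; rewrite -pc_bot -(hg0 (r + 1)).
  have : r < r + 1 by lra.
  by move/HFg => [].
rewrite (rmap_eta g) /pinf; f_equal; apply: functional_extensionality => x; by [rewrite lg1 | rewrite hg0].
Qed.

Lemma negm_hom (f : rmap M) : is_hom f -> is_hom (negm f).
Proof.
case=> H1 H3 H4; split => /=.
- move=> r s sr; rewrite meetC //; apply: H1; lra.
- move=> r; rewrite (H4 (- r)); apply: sup_ext => y; split.
  + move=> [t [tr ->]]; exists (- t); rewrite opprK; split => //; lra.
  + move=> [s [rs ->]]; exists (- s); split => //; lra.
- move=> s; rewrite (H3 (- s)); apply: sup_ext => y; split.
  + move=> [t [tr ->]]; exists (- t); rewrite opprK; split => //; lra.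
  + move=> [r [rs ->]]; exists (- r); split => //; lra.
Qed.

Lemma negm_C (f : rmap M) : inC f -> inC (negm f).
Proof.
case=> Hh H2 H5 H6; split => /=.
- exact: negm_hom.
- move=> r s rs; rewrite joinC //; apply: H2; lra.
- rewrite -H6; apply: sup_ext => y; split.
  + by move=> [r ->]; exists (- r).
  + by move=> [s ->]; exists (- s); rewrite opprK.
- rewrite -H5; apply: sup_ext => y; split.
  + by move=> [r ->]; exists (- r).
  + by move=> [s ->]; exists (- s); rewrite opprK.
Qed.

Lemma negm_Fbar (f : rmap M) : FbarM f -> FbarM (negm f).
Proof.
case=> Hh HF; split; first exact: negm_hom.
move=> r s rs /=; have : - s < - r by lra.
by move/HF => [].
Qed.

Lemma negmK (f : rmap M) : negm (negm f) = f.
Proof.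
case: f => l h; rewrite /negm /=; f_equal; apply: functional_extensionality => x;
by rewrite opprK.
Qed.

Lemma negm_Fle (f g : rmap M) : FleM f g -> FleM (negm g) (negm f).
Proof. by case=> H1 H2; split => x /=. Qed.

Lemma meet_to_join f g : meetM f g (minf M) -> joinM (negm f) (negm g) (pinf M).
Proof.
case=> H1 H2 H3 H4; split.
- exact: (negm_Fbar H1).
- exact: (negm_Fle H2).
- exact: (negm_Fle H3).
- move=> k Hk Hfk Hgk.
  have := H4 (negm k) (negm_Fbar Hk).
  rewrite -{1}(negmK f) -{1}(negmK g) => H.
  have := negm_Fle (H (negm_Fle Hfk) (negm_Fle Hgk)).
  by rewrite negmK.
Qed.

Lemma G_lemma (f : rmap M) : FbarM f ->
  dense (sup (fun x => exists s, x = hi f s)) ->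
  dense (sup (fun x => exists r, x = lo f r)) -> inFM f.
Proof.
move=> Hf D1 D2; split => // g Hg; split.
- exact: join_half.
- move=> Hm.
  have D2' : dense (sup (fun x => exists s, x = hi (negm f) s)).
    rewrite (_ : sup _ = sup (fun x => exists r, x = lo f r)) //.
    apply: sup_ext => y; split.
    + by move=> [s ->]; exists (- s).
    + by move=> [r ->]; exists (- r); rewrite /= opprK.
  have := join_half (negm_Fbar Hf) D2' (negm_Fbar Hg) (meet_to_join Hm).
  move=> E; by rewrite -(negmK g) E.
Qed.

Lemma dense_top : dense (top M).
Proof. by move=> y; rewrite meet_topr. Qed.

Lemma C_F (f : rmap M) : inC f -> inFM f.
Proof.
move=> Hc; apply: G_lemma; first exact: C_Fbar.
- case: Hc => _ _ _ ->; exact: dense_top.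
- case: Hc => _ _ -> _; exact: dense_top.
Qed.


Ltac lclose := rewrite ?pc_top ?pc_bot ?pc3; solve [ exact: lrefl | exact: le_top | exact: bot_le
  | exact: meet_l | exact: meet_r | (rewrite meetC; exact: pc_disj) | exact: pc_disj
  | (exfalso; rlra) ].

Lemma dense_of_top (P : M -> Prop) : P (top M) -> dense (sup P).
Proof. move=> H; rewrite (sup_eq H) //; [exact: dense_top | move=> y _; exact: le_top]. Qed.

Definition stepm (a : M) : rmap M :=
  RMap (fun r => if r < 0 then top M else if r < 1 then pc (pc a) else bot M)
       (fun s => if s <= 0 then bot M else if s <= 1 then pc a else top M).

Lemma stepm_Fbar a : FbarM (stepm a).
Proof.
split; first split.
- move=> r s sr /=; apply: le_bot; ifs; lclose.
- move=> r /=; symmetry; case: (ltP r 0) => H0 /=.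
  + apply: sup_eq; first by exists (r / 2); split; [rlra| ifs; first [reflexivity | exfalso; rlra]].
    move=> y _; exact: le_top.
  case: (ltP r 1) => H1 /=.
  + apply: sup_eq; first by exists ((r + 1) / 2); split; [rlra| ifs; first [reflexivity | exfalso; rlra]].
    move=> y [s [rs ->]]; ifs; lclose.
  + apply: sup_eq; first by exists (r + 1); split; [rlra| ifs; first [reflexivity | exfalso; rlra]].
    move=> y [s [rs ->]]; ifs; lclose.
- move=> s /=; symmetry; case: (leP s 0) => H0 /=.
  + apply: sup_eq; first by exists (s - 1); split; [rlra| ifs; first [reflexivity | exfalso; rlra]].
    move=> y [r [rs ->]]; ifs; lclose.
  case: (leP s 1) => H1 /=.
  + apply: sup_eq; first by exists (s / 2); split; [rlra| ifs; first [reflexivity | exfalso; rlra]].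
    move=> y [r [rs ->]]; ifs; lclose.
  + apply: sup_eq; first by exists ((s + 1) / 2); split; [rlra| ifs; first [reflexivity | exfalso; rlra]].
    move=> y _; exact: le_top.
- move=> r s rs /=; split; ifs; lclose.
Qed.

Lemma stepm_F a : inFM (stepm a).
Proof.
apply: G_lemma; first exact: stepm_Fbar.
- apply: dense_of_top; exists 2 => /=; ifs; first [reflexivity | exfalso; rlra].
- apply: dense_of_top; exists (-1) => /=; ifs; first [reflexivity | exfalso; rlra].
Qed.

Lemma F_ED : (forall f : rmap M, inFM f -> inC f) -> extremally_disconnected M.
Proof.
move=> H a; have [_ H2 _ _] := H _ (stepm_F a).
have : (0 : rat) < 1 by rlra.
move/H2 => /=; ifs; try (exfalso; rlra).
by rewrite joinC.
Qed.

Definition recm (f : rmap M) : rmap M :=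
  RMap (fun r => if r < 0 then top M else if r <= 0 then pc (pc (lo f 0))
                 else meet (pc (pc (lo f 0))) (hi f r^-1))
       (fun s => if s <= 0 then bot M else join (lo f s^-1) (pc (lo f 0))).

Lemma recm_Fbar f : inC f -> FbarM (recm f).
Proof.
move=> Cf; have [Hf HF] := C_Fbar Cf; case: (Cf) => _ R2 _ R6.
case: (Hf) => R1 R3 R4.
set p := lo f 0.
split; first split.
- move=> r s sr /=; apply: le_bot; ifs; try lclose.
  have hr : 0 < r by rlra. have hs : 0 < s by rlra.
  apply: meet_join_le.
  + apply: ltrans (_ : le _ (meet (lo f s^-1) (hi f r^-1))) _.
      apply: meet_glb; [exact: meet_r | apply: ltrans (meet_l _ _) _; exact: meet_r].
    apply: hom_disj => //; exact: inv_le.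
  + apply: ltrans (_ : le _ (meet (pc p) (pc (pc p)))) _; last exact: pc_disj.
    apply: meet_glb; [exact: meet_r | apply: ltrans (meet_l _ _) _; exact: meet_l].
- move=> r /=; symmetry; case: (ltP r 0) => H0 /=.
  + apply: sup_eq; [exists (r/2); split; [rlra| ifs; first [reflexivity|exfalso; rlra]] | move=> y _; exact: le_top].
  case: (leP r 0) => H1 /=.
  + have -> : r = 0 by apply/eqP; rewrite eq_le; apply/andP; split.
    apply: lanti.
    * apply: sup_lub => y [s [rs ->]]; ifs; lclose.
    * apply: ltrans (_ : le _ (meet (pc (pc p)) (sup (fun y => exists s, y = hi f s)))) _.
        rewrite R6 meet_topr; exact: lrefl.
      apply: meet_sup_le => q [t ->].
      case: (leP t 1) => Ht.
      -- apply: ltrans (_ : le _ (meet (pc (pc p)) (hi f 1^-1))) _.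
           apply: meet_mono; [exact: lrefl| apply: hi_mono => //; rewrite invr1 //].
         apply: sup_ub; exists 1; split; [rlra| ifs; first [reflexivity| exfalso; rlra]].
      -- have ht : 0 < t^-1 by apply inv_pos; rlra.
         apply: ltrans (_ : le _ (meet (pc (pc p)) (hi f (t^-1)^-1))) _.
           rewrite invrK; exact: lrefl.
         apply: sup_ub; exists t^-1; split; [rlra| ifs; first [reflexivity| exfalso; rlra]].
  + have hr' : 0 < r^-1 by exact: inv_pos.
    apply: lanti.
    * apply: sup_lub => y [s [rs ->]]; ifs; try lclose.
      apply: meet_mono; [exact: lrefl | apply: hi_mono => //; apply: inv_le; rlra].
    * rewrite {1}(R4 r^-1); apply: meet_sup_le => q [t [tr ->]].
      have key : forall u, 0 < u -> u < r^-1 -> t <= u -> le (meet (pc (pc p)) (hi f t))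
          (sup (fun y => exists s, r < s /\ y = (if s < 0 then top M else if s <= 0 then pc (pc p)
                 else meet (pc (pc p)) (hi f s^-1)))).
        move=> u hu ur tu.
        apply: ltrans (_ : le _ (meet (pc (pc p)) (hi f u))) _.
          apply: meet_mono; [exact: lrefl | exact: hi_mono].
        have hu' := inv_pos hu.
        have ru : r < u^-1 by have := inv_lt hu hr' ur; rewrite invrK.
        apply: sup_ub; exists u^-1; split => //.
        ifs; try (exfalso; rlra); by rewrite invrK.
      case: (leP t 0) => Ht.
      -- apply: (key (r^-1 / 2)); rlra.
      -- apply: (key ((t + r^-1) / 2)); rlra.
- move=> s /=; symmetry; case: (leP s 0) => H0 /=.
  + apply: sup_eq; [exists (s-1); split; [rlra| ifs; first [reflexivity|exfalso; rlra]] | move=> y [r [rs ->]]; ifs; lclose].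
  + have hs : 0 < s^-1 by exact: inv_pos.
    apply: lanti.
    * apply: sup_lub => y [r [rs ->]]; ifs; try lclose.
      apply: join_mono; [apply: lo_anti => //; apply: inv_le; rlra | exact: lrefl].
    * apply: join_lub.
      -- rewrite {1}(R3 s^-1); apply: sup_lub => y [t [st ->]].
         have hu : 0 < (s^-1 + t) / 2 by rlra.
         have hu2 : s^-1 < (s^-1 + t) / 2 by rlra.
         have hu' := inv_pos hu.
         apply: ltrans (_ : le _ (join (lo f (((s^-1 + t) / 2)^-1)^-1) (pc p))) _.
           rewrite invrK; apply: ltrans (join_l _ _); apply: lo_anti => //; rlra.
         apply: sup_ub; exists ((s^-1 + t) / 2)^-1; split.
           by have := inv_lt hs hu hu2; rewrite invrK.
         ifs; first [reflexivity| exfalso; rlra].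
      -- apply: ltrans (_ : le _ (join (lo f (s/2)^-1) (pc p))) _; first exact: join_r.
         apply: sup_ub; exists (s/2); split; [rlra| ifs; first [reflexivity|exfalso; rlra]].
- move=> r s rs /=; split.
  + ifs; try lclose.
    * rewrite pc3; exact: join_r.
    * have hr : 0 < r by rlra. have hs : 0 < s by rlra.
      have E := R2 _ _ (inv_lt hr hs rs).
      set X := pc (meet (pc (pc p)) (hi f r^-1)).
      apply: ltrans (_ : le _ (meet X (join (lo f s^-1) (hi f r^-1)))) _.
        rewrite E meet_topr; exact: lrefl.
      apply: meet_join_le.
      -- apply: ltrans (meet_r _ _) (join_l _ _).
      -- apply: ltrans (_ : le _ (pc p)) (join_r _ _).
         apply: pc_max.
         apply: ltrans (_ : le _ (meet (meet (pc (pc p)) (hi f r^-1)) X)) (pc_disj _).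
         apply: meet_glb; [apply: meet_glb; [apply: ltrans (meet_l _ _) (le_pcpc _) | apply: ltrans (meet_r _ _) (meet_r _ _)] | apply: ltrans (meet_r _ _) (meet_l _ _)].
  + ifs; try lclose.
    * apply: pc_anti; exact: join_r.
    * have hr : 0 < r by rlra. have hs : 0 < s by rlra.
      apply: meet_glb; first by apply: pc_anti; exact: join_r.
      apply: ltrans (_ : le _ (pc (lo f s^-1))) _; first by apply: pc_anti; exact: join_l.
      by case: (HF _ _ (inv_lt hr hs rs)).
Qed.

Lemma recm_F f : inC f -> inFM (recm f).
Proof.
move=> Cf; apply: G_lemma; first exact: recm_Fbar.
- move=> y H.
  have Hs : le (sup (fun x => exists s, x = hi (recm f) s)) (pc y) by exact: pc_max H.
  have [Hh _] := C_Fbar Cf; case: (Hh) => _ R3 _.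
  have H1 : le (pc (lo f 0)) (pc y).
    apply: ltrans Hs; apply: ltrans (_ : le _ (hi (recm f) 1)) _; last by apply: sup_ub; exists 1.
    rewrite /=; ifs; try (exfalso; rlra); exact: join_r.
  have H2 : le (lo f 0) (pc y).
    rewrite (R3 0); apply: sup_lub => q [t [t0 ->]].
    apply: ltrans Hs; apply: ltrans (_ : le _ (hi (recm f) t^-1)) _; last by apply: sup_ub; exists t^-1.
    have ht := inv_pos t0.
    rewrite /=; ifs; try (exfalso; rlra); rewrite invrK; exact: join_l.
  apply: ltrans (_ : le _ (meet (pc (lo f 0)) (pc (pc (lo f 0))))) (pc_disj _).
  apply: meet_glb; apply: pc_sym => //.
- apply: dense_of_top; exists (-1) => /=; ifs; first [reflexivity | exfalso; rlra].
Qed.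

Lemma P_lo (f : rmap M) : (forall g : rmap M, inFM g -> inC g) -> inC f -> complemented (lo f 0).
Proof.
move=> H Cf; have [_ _ _ R6] := H _ (recm_F Cf).
case: (C_Fbar Cf) => Hh _.
exists (pc (lo f 0)); split; first exact: le_bot (pc_disj _).
apply: top_le; rewrite -R6; apply: sup_lub => y [s ->] /=; ifs; try lclose.
apply: join_mono; [apply: lo_anti => //; apply: ltW; apply: inv_pos; rlra | exact: lrefl].
Qed.

Lemma compl_join (p q : M) : le (meet p q) (bot M) -> complemented p -> complemented q ->
  complemented (join p q).
Proof.
move=> Hpq [p' [Hp1 Hp2]] [q' [Hq1 Hq2]]; exists (meet p' q'); split.
- apply: le_bot; rewrite meetC; apply: meet_join_le.
  + apply: ltrans (_ : le _ (meet p p')) _; last by rewrite Hp1; exact: lrefl.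
    apply: meet_glb; [exact: meet_r | apply: ltrans (meet_l _ _) (meet_l _ _)].
  + apply: ltrans (_ : le _ (meet q q')) _; last by rewrite Hq1; exact: lrefl.
    apply: meet_glb; [exact: meet_r | apply: ltrans (meet_l _ _) (meet_r _ _)].
- apply: top_le; apply: ltrans (_ : le _ (meet (join p p') (join q q'))) _.
    rewrite Hp2 Hq2 meet_topl; exact: lrefl.
  apply: meet_join_le.
  + apply: ltrans (meet_r _ _) _; apply: ltrans (join_r p q) (join_l _ _).
  + rewrite meetC; apply: meet_join_le.
    * apply: ltrans (meet_r _ _) _; apply: ltrans (join_l p q) (join_l _ _).
    * apply: ltrans _ (join_r _ _); apply: meet_glb; [exact: meet_r | exact: meet_l].
Qed.

Lemma F_P : (forall g : rmap M, inFM g -> inC g) -> P_frame M.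
Proof.
move=> H a [f [Cf ->]].
have Hq : complemented (hi f 0).
  by have := P_lo H (negm_C Cf); rewrite /= oppr0.
apply: compl_join => //; last exact: P_lo.
case: (Cf) => [[R1 _ _] _ _ _]; rewrite meetC R1 //; exact: lrefl.
Qed.

Lemma pinf_Fbar : FbarM (pinf M).
Proof.
split; first split.
- move=> r s _ /=; apply: le_bot; exact: meet_r.
- move=> r /=; symmetry; apply: sup_eq; [by exists (r+1); split; [rlra|] | move=> y _; exact: le_top].
- move=> s /=; symmetry; apply: sup_eq; [by exists (s-1); split; [rlra|] | move=> y [r [_ ->]]; exact: lrefl].
- move=> r s _ /=; split; lclose.
Qed.

Lemma join_to_meet (f g : rmap M) : joinM f g (pinf M) -> meetM (negm f) (negm g) (minf M).
Proof.
case=> H1 H2 H3 H4; split.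
- exact: (negm_Fbar H1).
- exact: (negm_Fle H2).
- exact: (negm_Fle H3).
- move=> k Hk Hfk Hgk.
  have := H4 (negm k) (negm_Fbar Hk).
  rewrite -{1}(negmK f) -{1}(negmK g) => H.
  have := negm_Fle (H (negm_Fle Hfk) (negm_Fle Hgk)).
  by rewrite negmK.
Qed.

Lemma negm_F (f : rmap M) : inFM f -> inFM (negm f).
Proof.
case=> Hf H; split; first exact: negm_Fbar.
move=> g Hg; split.
- move=> J; have := join_to_meet J; rewrite negmK => Jm.
  have E := (H _ (negm_Fbar Hg)).2 Jm.
  by rewrite -(negmK g) E.
- move=> Mm; have := meet_to_join Mm; rewrite negmK => Jm.
  have E := (H _ (negm_Fbar Hg)).1 Jm.
  by rewrite -(negmK g) E.
Qed.

Lemma F_hi_dense (f : rmap M) : extremally_disconnected M -> inFM f ->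
  dense (sup (fun x => exists s, x = hi f s)).
Proof.
move=> ED [[Hh HF] H].
set a := sup (fun x => exists s, x = hi f s).
pose g := RMap (fun _ : rat => pc (pc a)) (fun _ : rat => pc a).
have Hg : FbarM g.
  split; first split.
  - move=> r s _ /=; apply: le_bot; rewrite meetC; exact: pc_disj.
  - move=> r /=; symmetry; apply: sup_eq; [by exists (r+1); split; [rlra|] | move=> y [s [_ ->]]; exact: lrefl].
  - move=> s /=; symmetry; apply: sup_eq; [by exists (s-1); split; [rlra|] | move=> y [r [_ ->]]; exact: lrefl].
  - move=> r s _ /=; rewrite pc3; split; exact: lrefl.
have J : joinM f g (pinf M).
  split.
  - exact: pinf_Fbar.
  - split => x /=; [exact: le_top | exact: bot_le].
  - split => x /=; [exact: le_top | exact: bot_le].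
  - move=> k Hk [Hfk1 Hfk2] [Hgk1 Hgk2]; split => x /=.
    + rewrite -(ED a); apply: join_lub; last exact: (Hgk1 x).
      apply: ltrans (Hfk1 x).
      apply: ltrans (_ : le _ (pc (hi f (x + 1)))) _.
        apply: pc_anti; apply: sup_ub; by exists (x + 1).
      have : x < x + 1 by rlra.
      by move/HF => [].
    + apply: ltrans (_ : le _ (meet a (pc a))) (pc_disj _).
      apply: meet_glb.
      * apply: ltrans (Hfk2 x) _; apply: sup_ub; by exists x.
      * exact: (Hgk2 x).
have E := (H g Hg).1 J.
have Ea : pc a = bot M := f_equal (fun h => hi h 0) E.
move=> y Hy; rewrite -Ea; apply: pc_max; by rewrite meetC.
Qed.

Lemma sup_lo_ub (g : rmap M) r s x : r < s -> le x (lo g s) ->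
  le x (sup (fun y => exists s0, r < s0 /\ y = lo g s0)).
Proof. move=> rs H; apply: ltrans H _; apply: sup_ub; by exists s. Qed.
Lemma sup_hi_ub (g : rmap M) s r x : r < s -> le x (hi g r) ->
  le x (sup (fun y => exists r0, r0 < s /\ y = hi g r0)).
Proof. move=> rs H; apply: ltrans H _; apply: sup_ub; by exists r. Qed.

Definition cozm (f : rmap M) : rmap M :=
  RMap (fun r => if r < 0 then top M else if r <= 0 then sup (fun x => exists s, x = hi f s)
                 else if r < 1 then hi f (r^-1 - 1) else bot M)
       (fun s => if s <= 0 then bot M else if s <= 1 then lo f (s^-1 - 1) else top M).

Lemma cozm_coz (f : rmap M) : join (hi (cozm f) 0) (lo (cozm f) 0) = sup (fun x => exists s, x = hi f s).
Proof.
rewrite /=; ifs; try (exfalso; rlra).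
apply: lanti; [apply: join_lub; [exact: bot_le | exact: lrefl] | exact: join_r].
Qed.

Lemma cozm_C (f : rmap M) : is_hom f -> (forall r s, r < s -> join (lo f r) (hi f s) = top M) -> inC (cozm f).
Proof.
move=> Hf R2; case: (Hf) => R1 R3 R4.
set a := sup (fun x => exists s, x = hi f s).
have Ha : forall t, le (hi f t) a by move=> t; apply: sup_ub; exists t.
have El : forall x, lo (cozm f) x = (if x < 0 then top M else if x <= 0 then a
                 else if x < 1 then hi f (x^-1 - 1) else bot M) by [].
have Eh : forall x, hi (cozm f) x = (if x <= 0 then bot M else if x <= 1 then lo f (x^-1 - 1) else top M) by [].
split; first split.
- move=> r s sr; rewrite El Eh; apply: le_bot; ifs; try lclose.
  have hr : 0 < r by rlra. have hs : 0 < s by rlra.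
  rewrite meetC; apply: hom_disj => //.
  have ? := inv_le hs hr sr; rlra.
- move=> r; rewrite El; symmetry; ifs.
  + apply: sup_eq; [exists (r/2); split; [rlra| rewrite El; ifs; first [reflexivity|exfalso; rlra]] | move=> y _; exact: le_top].
  + have Er : r = 0 by apply/eqP; rewrite eq_le; apply/andP; split; rlra.
    subst r; apply: lanti.
    * apply: sup_lub => y [s [rs ->]]; rewrite El; ifs; try lclose; exact: Ha.
    * apply: sup_lub => y [t ->].
      have key : forall u, 1 < u -> t <= u - 1 ->
          le (hi f t) (sup (fun y => exists s, 0 < s /\ y = lo (cozm f) s)).
        move=> u u1 tu; have h1 := inv_lt1 u1; have h2 : 0 < u^-1 by apply: inv_pos; rlra.
        apply: (sup_lo_ub (s := u^-1)) => //.
        rewrite El; ifs; try (exfalso; rlra); rewrite invrK; exact: hi_mono Hf tu.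
      case: (leP t 0) => Ht; [apply: (key 2) | apply: (key (t + 2))]; rlra.
  + have hr : 0 < r by rlra.
    have hr' : 1 < r^-1 by apply: inv_gt1; rlra.
    apply: lanti.
    * apply: sup_lub => y [s [rs ->]]; rewrite El; ifs; try lclose.
      have hs : 0 < s by rlra.
      apply: hi_mono Hf _; have ? := inv_le hr hs (ltW rs); rlra.
    * rewrite {1}(R4 (r^-1 - 1)); apply: sup_lub => y [t [tr ->]].
      have key : forall u, 1 < u -> u < r^-1 -> t <= u - 1 ->
          le (hi f t) (sup (fun y => exists s, r < s /\ y = lo (cozm f) s)).
        move=> u u1 ur tu; have h1 := inv_lt1 u1; have h2 : 0 < u^-1 by apply: inv_pos; rlra.
        have h3 : 0 < u by rlra. have h4 : 0 < r^-1 by rlra.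
        have ru : r < u^-1 by have := inv_lt h3 h4 ur; rewrite invrK.
        apply: (sup_lo_ub (s := u^-1)) => //.
        rewrite El; ifs; try (exfalso; rlra); rewrite invrK; exact: hi_mono Hf tu.
      case: (leP t 0) => Ht; [apply: (key ((1 + r^-1) / 2)) | apply: (key ((t + 1 + r^-1) / 2))]; rlra.
  + apply: sup_eq; [exists (r + 1); split; [rlra| rewrite El; ifs; first [reflexivity|exfalso; rlra]] | ].
    move=> y [s [rs ->]]; rewrite El; ifs; lclose.
- move=> s; rewrite Eh; symmetry; ifs.
  + apply: sup_eq; [exists (s - 1); split; [rlra| rewrite Eh; ifs; first [reflexivity|exfalso; rlra]] | ].
    move=> y [r [rs ->]]; rewrite Eh; ifs; lclose.
  + have H0 : 0 < s by rlra.
    have hs' : 0 < s^-1 by exact: inv_pos.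
    apply: lanti.
    * apply: sup_lub => y [r [rs ->]]; rewrite Eh; ifs; try lclose.
      have hr : 0 < r by rlra.
      apply: lo_anti Hf _; have ? := inv_le hr H0 (ltW rs); rlra.
    * rewrite {1}(R3 (s^-1 - 1)); apply: sup_lub => y [t [st ->]].
      have hu : 0 < (s^-1 + 1 + t) / 2 by rlra.
      have hu2 : s^-1 < (s^-1 + 1 + t) / 2 by rlra.
      have hu' := inv_pos hu.
      have rs : ((s^-1 + 1 + t) / 2)^-1 < s by have := inv_lt hs' hu hu2; rewrite invrK.
      apply: (sup_hi_ub (r := ((s^-1 + 1 + t) / 2)^-1)) => //.
      rewrite Eh; ifs; try (exfalso; rlra); rewrite invrK; apply: lo_anti Hf _; rlra.
  + apply: sup_eq; [exists ((1 + s) / 2); split; [rlra| rewrite Eh; ifs; first [reflexivity|exfalso; rlra]] | ].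
    move=> y _; exact: le_top.
- move=> r s rs; rewrite El Eh; ifs; try (apply: top_le; solve [exact: join_l | exact: join_r]);
    try (exfalso; rlra).
  + have E : s^-1 - 1 < s^-1 by rlra.
    apply: top_le; rewrite -(R2 _ _ E).
    apply: join_lub; [exact: join_r | apply: ltrans (Ha _) (join_l _ _)].
  + have h0r : 0 < r by rlra. have h0s : 0 < s by rlra.
    rewrite joinC; apply: R2; have ? := inv_lt h0r h0s rs; rlra.
- apply: sup_eq; [exists (-1); rewrite El; ifs; first [reflexivity|exfalso; rlra] | move=> y _; exact: le_top].
- apply: sup_eq; [exists 2; rewrite Eh; ifs; first [reflexivity|exfalso; rlra] | move=> y _; exact: le_top].
Qed.

Lemma F_hi_top (f : rmap M) : extremally_disconnected M -> P_frame M -> inFM f ->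
  sup (fun x => exists s, x = hi f s) = top M.
Proof.
move=> ED PF Ff.
have D := F_hi_dense ED Ff.
case: Ff => [[Hh HF] _].
have R2 := ED_r2 ED (conj Hh HF).
have Cz : cozero (sup (fun x => exists s, x = hi f s)).
  exists (cozm f); split; [exact: cozm_C | exact: (esym (cozm_coz f))].
have [b [Hb1 Hb2]] := PF _ Cz.
have Hb : le b (bot M) by apply: D; rewrite meetC Hb1; exact: lrefl.
apply: top_le; rewrite -Hb2; apply: join_lub; [exact: lrefl | exact: ltrans Hb (bot_le _)].
Qed.

Lemma F_C (f : rmap M) : extremally_disconnected M -> P_frame M -> inFM f -> inC f.
Proof.
move=> ED PF Ff; have Ff' := Ff; case: Ff' => [[Hh HF] _].
split => //.
- exact: (ED_r2 ED (conj Hh HF)).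
- rewrite -(F_hi_top ED PF (negm_F Ff)); apply: sup_ext => y; split.
  + by move=> [r ->]; exists (- r); rewrite /= opprK.
  + by move=> [s ->]; exists (- s).
- exact: F_hi_top.
Qed.
End Frame.

Lemma sup_unique_gen (M : poset) (anti : forall x y : M, le x y -> le y x -> x = y)
  (P : M -> Prop) x : is_sup P x -> sup P = x.
Proof.
move=> Hx; have Hs : is_sup P (sup P) by rewrite /sup; apply: epsilon_spec; exists x.
case: Hx => H1 H2; case: Hs => H3 H4; apply: anti; [exact: H4 | exact: H2].
Qed.
Lemma inf_unique_gen (M : poset) (anti : forall x y : M, le x y -> le y x -> x = y)
  (P : M -> Prop) x : is_inf P x -> inf P = x.
Proof.
move=> Hx; have Hs : is_inf P (inf P) by rewrite /inf; apply: epsilon_spec; exists x.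
case: Hx => H1 H2; case: Hs => H3 H4; apply: anti; [exact: H2 | exact: H4].
Qed.

Definition nu (L : poset) (S : L -> Prop) (x : L) : L := inf (fun s => S s /\ le x s).
Definition Jset (L : poset) (A B : L -> Prop) : L -> Prop :=
  fun x => exists s t, A s /\ B t /\ x = meet s t.
Definition Iset (L : poset) (P : coS L -> Prop) : L -> Prop :=
  fun x => forall S : coS L, P S -> proj1_sig S x.

Section CoS.
Context (L : poset) (HL : is_frame L).

Lemma yoneda (a b : L) : (forall z, le z a <-> le z b) -> a = b.
Proof.
move=> H; apply: (lanti HL); [apply/H; exact: lrefl | apply/H; exact: lrefl].
Qed.

Lemma imp_adj (z y x : L) : le z (imp y x) <-> le (meet z y) x.
Proof.
split; last by move=> H; apply: (sup_ub HL).
move=> H; apply: (ltrans HL) (_ : le _ (meet (imp y x) y)) _.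
  apply: (meet_mono HL) => //; exact: lrefl.
rewrite (meetC HL); apply: (meet_sup_le HL) => p Hp; rewrite (meetC HL) //.
Qed.

Lemma imp_meet (y s t : L) : imp y (meet s t) = meet (imp y s) (imp y t).
Proof.
apply: yoneda => z; split.
- move/imp_adj => H; apply: (meet_glb HL); apply/imp_adj; apply: (ltrans HL) H _;
  [exact: meet_l | exact: meet_r].
- move=> H; apply/imp_adj; apply: (meet_glb HL); apply/imp_adj; apply: (ltrans HL) H _;
  [exact: meet_l | exact: meet_r].
Qed.

Lemma imp_meet_eq (y s t : L) : le y s -> imp y (meet s t) = imp y t.
Proof.
move=> ys; apply: yoneda => z; split.
- move/imp_adj => H; apply/imp_adj; apply: (ltrans HL) H _; exact: meet_r.
- move/imp_adj => H; apply/imp_adj; apply: (meet_glb HL) => //.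
  apply: (ltrans HL) ys; exact: meet_r.
Qed.

Lemma meet_imp_self (x y : L) : le x y -> meet y (imp y x) = x.
Proof.
move=> xy; apply: (lanti HL).
- rewrite (meetC HL); apply/imp_adj; exact: lrefl.
- apply: (meet_glb HL) => //; apply/imp_adj; exact: meet_l.
Qed.

Lemma sl_inf (S : L -> Prop) (A : L -> Prop) : sublocale S -> (forall a, A a -> S a) -> S (inf A).
Proof. by case=> H _; apply: H. Qed.
Lemma sl_imp (S : L -> Prop) x s : sublocale S -> S s -> S (imp x s).
Proof. by case=> _ H; apply: H. Qed.
Lemma sl_meet (S : L -> Prop) a b : sublocale S -> S a -> S b -> S (meet a b).
Proof. move=> HS Ha Hb; apply: sl_inf => // y [->|->] //. Qed.
Lemma sl_top (S : L -> Prop) : sublocale S -> S (top L).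
Proof.
move=> HS; have -> : top L = inf (fun _ => False).
  apply: (lanti HL); [by apply: (inf_glb HL) | exact: le_top].
by apply: sl_inf.
Qed.

Lemma nu_in (S : L -> Prop) x : sublocale S -> S (nu S x).
Proof. move=> HS; apply: sl_inf => // a []. done. Qed.
Lemma le_nu (S : L -> Prop) x : le x (nu S x).
Proof. by apply: (inf_glb HL) => y []. Qed.
Lemma nu_le (S : L -> Prop) x s : S s -> le x s -> le (nu S x) s.
Proof. by move=> Ss xs; apply: (inf_lb HL). Qed.

Lemma J_char (A B : L -> Prop) x : sublocale A -> sublocale B ->
  Jset A B x <-> B (imp (nu A x) x).
Proof.
move=> HA HB; split.
- move=> [s [t [As [Bt ->]]]].
  rewrite imp_meet_eq; first exact: sl_imp.
  apply: nu_le => //; exact: meet_l.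
- move=> H; exists (nu A x), (imp (nu A x) x); split; first exact: nu_in.
  split => //; by rewrite meet_imp_self //; exact: le_nu.
Qed.

Lemma J_sub (A B : L -> Prop) : sublocale A -> sublocale B -> sublocale (Jset A B).
Proof.
move=> HA HB; split.
- move=> X HX.
  exists (inf (fun y => exists x, X x /\ y = nu A x)),
         (inf (fun y => exists x, X x /\ y = imp (nu A x) x)).
  split; first by apply: sl_inf => // y [x [_ ->]]; exact: nu_in.
  split; first by apply: sl_inf => // y [x [Xx ->]]; apply/J_char => //; exact: HX.
  apply: (lanti HL).
  + apply: (meet_glb HL).
    * apply: (inf_glb HL) => y [x [Xx ->]]; apply: (ltrans HL) (le_nu A x).
      exact: (inf_lb HL).
    * apply: (inf_glb HL) => y [x [Xx ->]]; apply/imp_adj.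
      apply: (ltrans HL) (meet_l HL _ _) _; exact: (inf_lb HL).
  + apply: (inf_glb HL) => x Xx.
    rewrite -(meet_imp_self (le_nu A x)).
    apply: (meet_mono HL); apply: (inf_lb HL); by exists x.
- move=> y x [s [t [As [Bt ->]]]]; rewrite imp_meet.
  exists (imp y s), (imp y t); split; first exact: sl_imp.
  by split => //; exact: sl_imp.
Qed.

Lemma coS_anti (a b : coS L) : le a b -> le b a -> a = b.
Proof.
case: a => A HA; case: b => B HB /= H1 H2.
have E : A = B.
  apply: functional_extensionality => x; apply: propositional_extensionality; split.
  + exact: H2.
  + exact: H1.
subst B; f_equal; apply: proof_irrelevance.
Qed.

Lemma I_sub (P : coS L -> Prop) : sublocale (Iset P).
Proof.
split.
- move=> X HX S PS; apply: sl_inf; first exact: (proj2_sig S).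
  move=> a Xa; exact: HX.
- move=> x s Hs S PS; apply: sl_imp; [exact: (proj2_sig S) | exact: Hs].
Qed.

Lemma coS_sup (P : coS L -> Prop) : sup P = exist _ (Iset P) (I_sub P).
Proof.
apply: sup_unique_gen; first exact: coS_anti.
split.
- move=> S PS x /= Ix; exact: Ix.
- move=> z Hz x zx S PS; exact: Hz.
Qed.

Lemma coS_meet (a b : coS L) :
  meet a b = exist _ (Jset (proj1_sig a) (proj1_sig b)) (J_sub (proj2_sig a) (proj2_sig b)).
Proof.
apply: inf_unique_gen; first exact: coS_anti.
split.
- move=> y [->|->] x /= Hx.
  + exists x, (top L); split => //; split; first exact: sl_top (proj2_sig b).
    by rewrite (meet_topr HL).
  + exists (top L), x; split; first exact: sl_top (proj2_sig a).
    by split => //; rewrite (meet_topl HL).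
- move=> z Hz x /= [s [t [As [Bt ->]]]].
  apply: sl_meet; first exact: (proj2_sig z).
  + exact: (Hz a (or_introl erefl)).
  + exact: (Hz b (or_intror erefl)).
Qed.

Lemma mem_sup (P : coS L -> Prop) x : proj1_sig (sup P) x <-> Iset P x.
Proof. by rewrite coS_sup. Qed.
Lemma mem_meet (a b : coS L) x :
  proj1_sig (meet a b) x <-> Jset (proj1_sig a) (proj1_sig b) x.
Proof. by rewrite coS_meet. Qed.

Lemma coS_frame : is_frame (coS L).
Proof.
split.
- by move=> x y.
- by move=> x y z H1 H2 u Hu; apply: H1; apply: H2.
- exact: coS_anti.
- move=> P; exists (exist _ (Iset P) (I_sub P)); split.
  + move=> S PS x /= Ix; exact: Ix.
  + move=> z Hz x zx S PS; exact: Hz.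
- move=> a P; apply: coS_anti => x.
  + move/mem_sup => Hx; apply/mem_meet.
    apply/J_char; [exact: (proj2_sig a) | exact: (proj2_sig (sup P)) |].
    apply/mem_sup => p Pp.
    have := Hx (meet a p) (ex_intro _ p (conj Pp erefl)).
    move/mem_meet/J_char; apply; [exact: (proj2_sig a) | exact: (proj2_sig p)].
  + move/mem_meet => -[s [t [As [It ->]]]]; apply/mem_sup => y [p [Pp ->]].
    apply/mem_meet; exists s, t; split => //; split => //.
    by move/mem_sup: It; apply.
Qed.

End CoS.

Theorem proposition6p3 (L : poset) (HL : is_frame L) :
  (forall f : rmap (coS L), inF f <-> inC f) <->
  (extremally_disconnected (coS L) /\ P_frame (coS L)).
Proof.
have HM := coS_frame HL.
split.
- move=> H.
  have H' : forall g : rmap (coS L), inFM g -> inC g by move=> g /H.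
  split; [exact: F_ED HM H' | exact: F_P HM H'].
- move=> [ED PF] f; split.
  + move=> Ff; exact: (F_C HM ED PF Ff).
  + move=> Cf; exact: (C_F HM Cf).
Qed.
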